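(* Let $\mathcal D\subseteq(0,1)$ and $f:\mathcal D\to(0,1)$. Then $f$ has a block simulation if and only if there exist an integer $k\ge0$ and integers $d_0,\dots,d_k,e_0,\dots,e_k$ with $0\le d_i\le e_i$ for all $i$ such that, writing $D(p)=\sum_{i=0}^k d_ip^i(1-p)^{k-i}$ and $E(p)=\sum_{i=0}^k e_ip^i(1-p)^{k-i}$, one has $E(p)\ne0$ and $f(p)=D(p)/E(p)$ for all $p\in\mathcal D$.
   Context: For $w\in\{0,1\}^*$ let $n_i(w)$ be the number of $i$'s in $w$; $\mathbf P_p[w]=p^{n_1(w)}(1-p)^{n_0(w)}$, $\mathbf P_p[L]=\sum_{w\in L}\mathbf P_p[w]$. A simulation of $f:\mathcal D\to[0,1]$ is a pair of disjoint languages $L_0,L_1\subseteq\{0,1\}^*$ with $L_0\cup L_1$ prefix-free such that $\mathbf P_p[L_0\cup L_1]=1$ and $\mathbf P_p[L_1]=f(p)$ for all $p\in\mathcal D$. A block simulation of $f$ is a simulation of the following form: for some $k\ge1$ and disjoint sets $A_0,A_1\subseteq\{0,1\}^k$, with $A'=\{0,1\}^k\setminus(A_0\cup A_1)$, one has $L_i=(A')^*A_i$, the set of concatenations $u_1\cdots u_mv$ with $m\ge0$, $u_j\in A'$, $v\in A_i$. *)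

(* Defs.v *)
From HB Require Import structures.
From mathcomp Require Import all_boot all_order all_algebra.
From mathcomp Require Import all_classical all_reals.
From mathcomp Require Import ereal esum.

Set Implicit Arguments.
Unset Strict Implicit.
Unset Printing Implicit Defensive.

Import Order.TTheory GRing.Theory Num.Theory.
Local Open Scope classical_set_scope.
Local Open Scope ring_scope.

(* Words over {0,1} are bit sequences: true = 1, false = 0. *)
Definition word := seq bool.

Definition n1 (w : word) : nat := count id w.
Definition n0 (w : word) : nat := count negb w.

Definition Pw {R : realType} (p : R) (w : word) : R :=
  p ^+ n1 w * (1 - p) ^+ n0 w.

Definition PL {R : realType} (p : R) (L : set word) : \bar R :=
  \esum_(w in L) (Pw p w)%:E.

Definition prefix_free (L : set word) : Prop :=
  forall u v, L u -> L v -> prefix u v -> u = v.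

Definition simulation {R : realType} (D : set R) (f : R -> R)
  (L0 L1 : set word) : Prop :=
  [/\ L0 `&` L1 = set0,
      prefix_free (L0 `|` L1) &
      forall p, D p -> PL p (L0 `|` L1) = 1%E /\ PL p L1 = (f p)%:E].

Definition star_cat (A' A : set word) : set word :=
  [set w | exists (us : seq word) (v : word),
      [/\ (forall u, u \in us -> A' u), A v & w = flatten us ++ v]].

Definition has_block_simulation {R : realType} (D : set R) (f : R -> R) : Prop :=
  exists (k : nat) (A0 A1 : set word),
    [/\ (0 < k)%N,
        A0 `<=` [set w | size w = k],
        A1 `<=` [set w | size w = k],
        A0 `&` A1 = set0 &
        let A' := [set w | size w = k] `\` (A0 `|` A1) in
        simulation D f (star_cat A' A0) (star_cat A' A1)].

Definition bern_poly {R : realType} (k : nat) (c : nat -> nat) (p : R) : R :=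
  \sum_(i < k.+1) (c i)%:R * p ^+ i * (1 - p) ^+ (k - i).

(* Main.v *)
Require Import Defs.
From HB Require Import structures.
From mathcomp Require Import all_boot all_order all_algebra.
From mathcomp Require Import all_classical all_reals.
From mathcomp Require Import ereal esum.
From mathcomp Require Import topology normedtype sequences.
From mathcomp Require Import zify.
Import Order.TTheory GRing.Theory Num.Theory.
Local Open Scope classical_set_scope.
Local Open Scope ring_scope.

Set Implicit Arguments.
Unset Strict Implicit.
Unset Printing Implicit Defensive.

Lemma esumZl_ (R : realType) (T : choiceType) (I : set T) (a : T -> \bar R) (r : R) :
  0 <= r -> (forall i, 0 <= a i)%E ->
  (\esum_(i in I) (r%:E * a i) = r%:E * \esum_(i in I) a i)%E.
Proof.
move=> r0 a0; rewrite /esum -ereal_supZl//; last first.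
  apply/set0P; exists (\sum_(x \in set0) a x)%E; exists set0 => //; exact: fsets_set0.
congr ereal_sup; apply/seteqP; split=> x /=.
  by move=> [A fA <-]; exists (\sum_(x \in A) a x)%E; [exists A|rewrite ge0_mule_fsumr].
by move=> [y [A fA <-] <-]; exists A => //; rewrite ge0_mule_fsumr.
Qed.

Lemma n1_cat u w : n1 (u ++ w) = (n1 u + n1 w)%N.
Proof. by rewrite /n1 count_cat. Qed.
Lemma n0_cat u w : n0 (u ++ w) = (n0 u + n0 w)%N.
Proof. by rewrite /n0 count_cat. Qed.

Lemma Pw_cat (R : realType) (p : R) u w : Pw p (u ++ w) = Pw p u * Pw p w.
Proof. by rewrite /Pw n1_cat n0_cat !exprD; rewrite mulrACA. Qed.

Lemma Pw_ge0 (R : realType) (p : R) w : 0 <= p <= 1 -> 0 <= Pw p w.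
Proof. by move=> /andP[p0 p1]; rewrite /Pw mulr_ge0 // exprn_ge0 // subr_ge0. Qed.

Lemma n1n0 w : (n1 w + n0 w)%N = size w.
Proof. by rewrite /n1 /n0 -(count_predC id w). Qed.

Definition SK (k : nat) : set word := [set w | size w = k].

Definition catset (X Y : set word) : set word :=
  (fun z : word * word => z.1 ++ z.2) @` (X `*` Y).

Lemma cat_inj k (x y r s : word) : size x = k -> size y = k -> x ++ r = y ++ s -> x = y /\ r = s.
Proof.
move=> sx sy e.
have := congr1 (take k) e; have := congr1 (drop k) e.
by rewrite !take_size_cat // !drop_size_cat.
Qed.

Lemma PL_cat (R : realType) (p : R) k (X Y : set word) (x : R) :
  0 <= p <= 1 -> X `<=` SK k -> PL p X = x%:E ->
  PL p (catset X Y) = (x%:E * PL p Y)%E.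
Proof.
move=> hp XK PX; rewrite /PL /catset esum_image; last first.
  move=> [u w] [u' w'] /set_mem [Xu Yw] /set_mem [Xu' Yw'] /= e.
  by have /= [-> ->] := cat_inj (XK _ Xu) (XK _ Xu') e.
rewrite (reindex_esum (Y `*` X) (X `*` Y) (fun z => (z.2, z.1))); last first.
  split.
  - by move=> [a b] [/= Ya Xb]; split.
  - by move=> [a b] [a' b'] _ _ /= [-> ->].
  - by move=> [a b] [Xa Yb]; exists (b, a).
rewrite /=.
transitivity (\esum_(z in Y `*`` (fun _ => X)) ((Pw p z.2)%:E * (Pw p z.1)%:E))%E.
  by apply: eq_esum => z _; rewrite Pw_cat EFinM.
rewrite -(@esum_esum _ _ _ Y (fun _ => X) (fun i j => (Pw p j)%:E * (Pw p i)%:E)%E); last by move=> i j _ _; rewrite mule_ge0 // lee_fin Pw_ge0.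
transitivity (\esum_(i in Y) (x%:E * (Pw p i)%:E))%E.
  apply: eq_esum => i _; rewrite -PX /PL.
  under eq_esum do rewrite muleC.
  rewrite esumZl_ ?Pw_ge0 //; [exact: muleC| move=> j; rewrite lee_fin Pw_ge0 //].
rewrite esumZl_ // => [|j]; last by rewrite lee_fin Pw_ge0.
have : (0 <= PL p X)%E by apply: esum_ge0 => i _; rewrite lee_fin Pw_ge0.
by rewrite PX lee_fin.
Qed.

Section PLfacts.
Variables (R : realType) (p : R).
Hypothesis hp : 0 <= p <= 1.

Lemma PL_ge0 A : (0 <= PL p A)%E.
Proof. by apply: esum_ge0 => i _; rewrite lee_fin Pw_ge0. Qed.

Lemma PL_split A B : A `<=` B -> PL p B = (PL p A + PL p (B `\` A))%E.
Proof.
move=> AB; rewrite /PL (esumID A); last by move=> i _; rewrite lee_fin Pw_ge0.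
by rewrite setDE; congr (_ + _)%E; rewrite setIidr.
Qed.

Lemma PL_mono A B : A `<=` B -> (PL p A <= PL p B)%E.
Proof. by move=> AB; rewrite (PL_split AB) leeDl // PL_ge0. Qed.

Lemma PL_set1 w : PL p [set w] = (Pw p w)%:E.
Proof. by rewrite /PL esum_set1 // lee_fin Pw_ge0. Qed.

Lemma SK1 : SK 1 = [set [:: true]] `|` [set [:: false]].
Proof.
apply/seteqP; split => w /=.
  by case: w => [|[] [|]] //= _; [left|right].
by rewrite /SK /= => -[] ->.
Qed.

Lemma PL_SK1 : PL p (SK 1) = 1%E.
Proof.
rewrite (@PL_split [set [:: true]]); last by rewrite SK1; exact: subsetUl.
have -> : SK 1 `\` [set [:: true]] = [set [:: false]].
  by rewrite SK1 setDUl setDv set0U; apply/setDidPl; rewrite -subset0 => w [/= ->].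
by rewrite !PL_set1 /Pw /= !expr0 !expr1 mulr1 mul1r -EFinD addrC subrK.
Qed.

Lemma SKS k : SK k.+1 = catset (SK 1) (SK k).
Proof.
apply/seteqP; split => w /=.
  case: w => [|b w] //= [sw]; exists ([:: b], w) => //.
by move=> [[u v] [/= su sv] <-]; rewrite /SK /= size_cat su sv.
Qed.

Lemma PL_SK k : PL p (SK k) = 1%E.
Proof.
elim: k => [|k IH].
  have -> : SK 0 = [set [::]] by apply/seteqP; split => w /=; [case: w|move=> ->].
  by rewrite PL_set1 /Pw /= mulr1.
by rewrite SKS (@PL_cat _ _ 1 _ _ 1) // ?PL_SK1 // IH mule1.
Qed.

Lemma PL_fin k A : A `<=` SK k -> PL p A = (fine (PL p A))%:E /\ 0 <= fine (PL p A) <= 1.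
Proof.
move=> AK; have h0 := PL_ge0 A; have h1 : (PL p A <= 1)%E by rewrite -(PL_SK k) PL_mono.
have fin : PL p A \is a fin_num by rewrite ge0_fin_numE // (le_lt_trans h1) // ltey.
by rewrite fineK //; split => //; rewrite -!lee_fin fineK // h0.
Qed.
End PLfacts.

Lemma geo (R : realType) (a b : R) : 0 <= b -> b < 1 ->
  (\sum_(i <oo) (b ^+ i * a)%:E)%E = (a / (1 - b))%:E.
Proof.
move=> b0 b1; apply: cvg_lim => //.
apply: cvg_EFin; first by apply: nearW => n; rewrite sumEFin.
have := @cvg_geometric_series R a b; rewrite ger0_norm // => /(_ b1).
apply: cvg_trans; apply: near_eq_cvg; apply: nearW => n /=.
by rewrite sumEFin /= seriesEnat; apply: eq_bigr => i _; rewrite mulrC.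
Qed.

Lemma geo' (R : realType) (a b : R) : 0 <= b -> (b < 1 \/ a = 0) ->
  (\sum_(i <oo) (b ^+ i * a)%:E)%E = (a / (1 - b))%:E.
Proof.
move=> b0 [b1|->]; first exact: geo.
transitivity (\sum_(i <oo) ((0:R) ^+ i * 0)%:E)%E; last by rewrite geo // !mul0r.
have -> : (fun n => \sum_(0 <= i < n) (b ^+ i * 0)%:E) =
  (fun n => \sum_(0 <= i < n) ((0:R) ^+ i * 0)%:E :> \bar R).
  by apply/funext => n; apply: eq_bigr => i _; rewrite !mulr0.
by [].
Qed.

Definition layer (B A : set word) (m : nat) : set word := iter m (catset B) A.

Lemma star_layers B A : star_cat B A = \bigcup_m layer B A m.
Proof.
apply/seteqP; split => w.
  move=> [us [v [hus hv ->]]]; exists (size us) => //.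
  elim: us hus => [|u us IH] hus /=; first by [].
  exists (u, flatten us ++ v); last by rewrite /= catA.
  by split; [apply: hus; rewrite mem_head | apply: IH => x hx; apply: hus; rewrite in_cons hx orbT].
move=> [m _]; elim: m w => [|m IH] w /=.
  by move=> hw; exists [::], w; split.
move=> [[u w'] [/= Bu /IH [us [v [hus hv ->]]]] <-].
exists (u :: us), v; split => //=; last by rewrite catA.
by move=> x; rewrite in_cons => /orP[/eqP ->|/hus].
Qed.

Lemma layer_size k B A m : A `<=` SK k -> B `<=` SK k -> layer B A m `<=` SK (m * k + k).
Proof.
move=> AK BK; elim: m => [|m IH] w /=; first by move/AK.
by move=> [[u w'] [/= /BK su /IH sw] <-]; rewrite /SK /= size_cat su sw mulSn addnA.
Qed.

Lemma layer_triv k B A : (0 < k)%N -> A `<=` SK k -> B `<=` SK k ->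
  trivIset setT (layer B A).
Proof.
move=> k0 AK BK i j _ _ [w [/(layer_size AK BK) hi /(layer_size AK BK) hj]].
move: hi hj; rewrite /SK /= => -> /eqP; rewrite eqn_add2r eqn_mul2r.
by rewrite -(prednK k0) /= => /eqP.
Qed.

Lemma PL_layer (R : realType) (p : R) k B A (a b : R) : 0 <= p <= 1 ->
  B `<=` SK k -> PL p B = b%:E -> PL p A = a%:E -> forall m,
  PL p (layer B A m) = (b ^+ m * a)%:E.
Proof.
move=> hp BK PB PA; elim => [|m IH] /=; first by rewrite expr0 mul1r.
by rewrite (PL_cat _ hp BK PB) IH -EFinM exprS mulrA.
Qed.

Lemma PL_star (R : realType) (p : R) k B A (a b : R) : 0 < p < 1 -> (0 < k)%N ->
  A `<=` SK k -> B `<=` SK k -> PL p B = b%:E -> PL p A = a%:E ->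
  PL p (star_cat B A) = (\sum_(i <oo) (b ^+ i * a)%:E)%E.
Proof.
move=> /andP[p0 p1] k0 AK BK PB PA.
have hp : 0 <= p <= 1 by rewrite ltW // ltW.
rewrite /PL star_layers nneseries_sum_bigcup; last by move=> w; rewrite lee_fin Pw_ge0.
  have -> : (fun n => \sum_(0 <= i < n) \esum_(j in layer B A i) (Pw p j)%:E) =
    (fun n => \sum_(0 <= i < n) (b ^+ i * a)%:E :> \bar R).
    by apply/funext => n; apply: eq_bigr => i _; rewrite -(PL_layer hp BK PB PA).
  by [].
exact: layer_triv k0 AK BK.
Qed.

Section Block.
Variables (k : nat) (A0 A1 : set word).
Hypotheses (k0 : (0 < k)%N) (A0K : A0 `<=` SK k) (A1K : A1 `<=` SK k)
  (A01d : A0 `&` A1 = set0).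
Let A01 := A0 `|` A1.
Let B := SK k `\` A01.

Lemma A01K : A01 `<=` SK k.
Proof. by move=> w [/A0K|/A1K]. Qed.
Lemma BK : B `<=` SK k.
Proof. by move=> w []. Qed.

Lemma uniq_dec us : forall us' v v' s, (forall x, x \in us -> B x) ->
  (forall x, x \in us' -> B x) -> A01 v -> A01 v' ->
  flatten us ++ v ++ s = flatten us' ++ v' -> [/\ us = us', v = v' & s = [::]].
Proof.
elim: us => [|x xs IH] [|y ys] v v' s hus hus' hv hv' /=.
- move=> e; have := congr1 size e; rewrite size_cat (A01K hv) (A01K hv').
  move=> /eqP; rewrite -{2}[k]addn0 eqn_add2l size_eq0 => /eqP s0.
  by move: e; rewrite s0 cats0.
- rewrite -catA => /(cat_inj (A01K hv) (BK (hus' y (mem_head _ _)))) [vy _].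
  by have [_] := hus' y (mem_head _ _); rewrite -vy.
- move=> e; have := congr1 size e; rewrite !size_cat (A01K hv').
  rewrite (BK (hus x (mem_head _ _))) (A01K hv); lia.
- rewrite -!catA => /(cat_inj (BK (hus x (mem_head _ _))) (BK (hus' y (mem_head _ _)))).
  move=> [xy e].
  have h1 : forall z, z \in xs -> B z by move=> z hz; apply: hus; rewrite in_cons hz orbT.
  have h2 : forall z, z \in ys -> B z by move=> z hz; apply: hus'; rewrite in_cons hz orbT.
  have [-> -> ->] := IH ys v v' s h1 h2 hv hv' e.
  by rewrite xy.
Qed.

Lemma star_catU : star_cat B A0 `|` star_cat B A1 = star_cat B A01.
Proof.
apply/seteqP; split => w.
  by move=> [] [us [v [h1 h2 ->]]]; exists us, v; split => //; [left|right].
by move=> [us [v [h1 [h2|h2] ->]]]; [left|right]; exists us, v.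
Qed.

Lemma block_disj : star_cat B A0 `&` star_cat B A1 = set0.
Proof.
rewrite -subset0 => w [[us [v [h1 h2 ->]]] [us' [v' [h1' h2' e]]]].
have e' : flatten us ++ v ++ [::] = flatten us' ++ v' by rewrite cats0.
have [_ vv _] := uniq_dec h1 h1' (or_introl h2) (or_intror h2') e'.
have : (A0 `&` A1) v by split => //; rewrite vv.
by rewrite A01d.
Qed.

Lemma block_pf : prefix_free (star_cat B A0 `|` star_cat B A1).
Proof.
rewrite star_catU => u w [us [v [h1 h2 ->]]] [us' [v' [h1' h2' ->]]] /prefixP [s e].
have e' : flatten us ++ v ++ s = flatten us' ++ v' by rewrite catA e.
have [-> -> _] := uniq_dec h1 h1' h2 h2' e'.
by [].
Qed.

Variables (R : realType) (p : R).
Hypothesis hp : 0 < p < 1.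

Lemma block_prob A : A `<=` A01 ->
  PL p (star_cat B A) = (fine (PL p A) / fine (PL p A01))%:E.
Proof.
move=> AA; have hp' : 0 <= p <= 1 by case/andP: hp => /ltW -> /ltW ->.
have AK : A `<=` SK k by move=> w /AA /A01K.
have [PA /andP[a0 a1]] := PL_fin hp' AK.
have [PB /andP[b0 b1]] := PL_fin hp' BK.
have [P01 /andP[c0 c1]] := PL_fin hp' A01K.
have sum1 : fine (PL p A01) + fine (PL p B) = 1.
  have := PL_split hp' A01K; rewrite (PL_SK hp') P01 -/B PB -EFinD.
  by move=> [->].
have ac : fine (PL p A) <= fine (PL p A01).
  by rewrite -lee_fin -PA -P01 PL_mono.
rewrite (PL_star hp k0 AK BK PB PA) geo' //.
  by congr (_ / _)%:E; rewrite -sum1 addrK.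
have [b1'|b1'] := ltP (fine (PL p B)) 1; first by left.
right; apply/eqP; rewrite eq_le a0 andbT (le_trans ac) //.
have -> : fine (PL p A01) = 1 - fine (PL p B) by rewrite -sum1 addrK.
by rewrite subr_le0.
Qed.
End Block.

Lemma esum_fin (R : realType) (T : finType) (X : set T) (f : T -> R) :
  (forall t, 0 <= f t) ->
  (\esum_(t in X) (f t)%:E)%E = (\sum_(t | t \in X) f t)%:E.
Proof.
move=> f0; rewrite esum_fset; last 2 first.
- exact: finite_finset.
- by move=> i _; rewrite lee_fin.
rewrite fsbig_finite; last exact: finite_finset.
rewrite big_uniq; last exact: finmap.fset_uniq.
rewrite -sumEFin; apply: eq_bigl => t; rewrite in_fset_set //; exact: finite_finset.
Qed.

Definition cnt k (A : set word) (i : nat) : nat :=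
  #|[pred t : k.-tuple bool | (val t \in A) && (n1 t == i)]|.

Lemma n1_tuple k (t : k.-tuple bool) : (n1 t <= k)%N.
Proof. by rewrite /n1 -{2}(size_tuple t) count_size. Qed.

Lemma PL_cnt (R : realType) (p : R) k (A : set word) : 0 <= p <= 1 -> A `<=` SK k ->
  PL p A = (bern_poly k (cnt k A) p)%:E.
Proof.
move=> hp AK.
have eA : A = val @` [set t : k.-tuple bool | A (val t)].
  apply/seteqP; split => w.
    by move=> Aw; exists (@Tuple k bool w (introT eqP (AK w Aw))).
  by move=> [t /= At <-].
rewrite /PL {1}eA esum_image; last by move=> t1 t2 _ _; exact: val_inj.
rewrite esum_fin; last by move=> t; exact: Pw_ge0.
congr _%:E; rewrite /bern_poly.
rewrite (partition_big (fun t : k.-tuple bool => (inord (n1 t) : 'I_k.+1)) xpredT) //=.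
apply: eq_bigr => i _.
rewrite (eq_bigr (fun _ => p ^+ i * (1 - p) ^+ (k - i))); last first.
  move=> t /andP[_ /eqP <-]; rewrite inordK ?ltnS ?n1_tuple //.
  by have := n1n0 t; rewrite size_tuple /Pw => e; rewrite -[X in (X - _)%N]e addKn.
rewrite (eq_bigl (fun t => t \in [pred t : k.-tuple bool | (val t \in A) && (n1 t == i)])).
  by rewrite sumr_const -mulrA mulr_natl.
move=> t; rewrite inE /=; congr andb.
by rewrite -val_eqE /= inordK // ltnS n1_tuple.
Qed.

Lemma forward (R : realType) (D : set R) (f : R -> R)
  (hD : forall p, D p -> 0 < p < 1) :
  has_block_simulation D f ->
  exists (k : nat) (d e : nat -> nat),
    (forall i, (i <= k)%N -> (d i <= e i)%N) /\
    (forall p, D p -> bern_poly k e p != 0 /\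
                      f p = bern_poly k d p / bern_poly k e p).
Proof.
move=> [k [A0 [A1 [k0 A0K A1K A01d /= [_ _ prob]]]]].
exists k, (cnt k A1), (cnt k (A0 `|` A1)); split.
  move=> i _; apply: subset_leq_card; apply/fintype.subsetP => t; rewrite !inE.
  by move=> /andP[/set_mem h ->]; rewrite andbT; apply/mem_set; right.
move=> p Dp; have [h1 h2] := prob p Dp.
have hp := hD p Dp; have hp' : 0 <= p <= 1 by case/andP: hp => /ltW -> /ltW ->.
have A01K : A0 `|` A1 `<=` SK k by move=> w [/A0K|/A1K].
have P01 := PL_cnt hp' A01K.
have P1 := PL_cnt hp' A1K.
have e1 := block_prob k0 A0K A1K hp (@subset_refl _ (A0 `|` A1)).
have e2 := block_prob k0 A0K A1K hp (@subsetUr _ A0 A1).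
rewrite P01 /= in e1; rewrite P01 P1 /= in e2.
rewrite star_catU e1 in h1; rewrite e2 in h2.
case: h2 => <-; split => //.
apply/negP => /eqP e0; move: h1; rewrite e0 mul0r => -[] /eqP.
by rewrite eq_sym oner_eq0.
Qed.

Definition blk (a m : nat) : word := nseq a true ++ nseq (m - a) false.

Lemma size_blk a m : (a <= m)%N -> size (blk a m) = m.
Proof. by move=> am; rewrite /blk size_cat !size_nseq subnKC. Qed.
Lemma n1_blk a m : (a <= m)%N -> n1 (blk a m) = a.
Proof. by move=> am; rewrite /n1 /blk count_cat !count_nseq /= mul1n mul0n addn0. Qed.
Lemma n0_blk a m : (a <= m)%N -> n0 (blk a m) = (m - a)%N.
Proof. by move=> am; rewrite /n0 /blk count_cat !count_nseq /= mul1n mul0n. Qed.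
Lemma n1_negb s : n1 (map negb s) = n0 s.
Proof. by rewrite /n1 /n0 count_map. Qed.
Lemma n0_negb s : n0 (map negb s) = n1 s.
Proof. by rewrite /n1 /n0 count_map; apply: eq_count => b; case: b. Qed.

Section Construct.
Variables (k Mx : nat).

Definition wd (z : nat * nat) : word := blk z.1 k ++ blk z.2 Mx ++ map negb (blk z.2 Mx).

Definition Iset (g : nat -> nat) : set (nat * nat) :=
  [set i | (i < k.+1)%N] `*`` (fun i => [set c | (c < g i)%N]).

Lemma wd_size z : (z.1 <= k)%N -> (z.2 <= Mx)%N -> size (wd z) = (k + Mx + Mx)%N.
Proof. by move=> h1 h2; rewrite /wd size_cat (size_blk h1) size_cat size_map (size_blk h2) addnA. Qed.

Lemma Pw_wd (R : realType) (p : R) z : (z.1 <= k)%N -> (z.2 <= Mx)%N ->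
  Pw p (wd z) = (p ^+ Mx * (1 - p) ^+ Mx) * (p ^+ z.1 * (1 - p) ^+ (k - z.1)).
Proof.
move=> h1 h2; rewrite /wd (Pw_cat p (blk _ k)) (Pw_cat p (blk _ Mx)) /Pw n1_negb n0_negb !n1_blk // !n0_blk //.
rewrite [X in _ * X = _]mulrACA -exprD -exprD subnKC // subnK //.
exact: mulrC.
Qed.

Lemma wd_inj z z' : (z.1 <= k)%N -> (z.2 <= Mx)%N -> (z'.1 <= k)%N -> (z'.2 <= Mx)%N ->
  wd z = wd z' -> z = z'.
Proof.
move: z z' => [i c] [i' c'] /= h1 h2 h1' h2'.
rewrite /wd /= => /(cat_inj (size_blk h1) (size_blk h1')) [e1 /(cat_inj (size_blk h2) (size_blk h2')) [e2 _]].
by rewrite -(n1_blk h1) -(n1_blk h2) e1 e2 n1_blk // n1_blk.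
Qed.

Lemma esum_ord (R : realType) n (f : nat -> R) : (forall i, 0 <= f i) ->
  (\esum_(i in `I_n) (f i)%:E)%E = (\sum_(i < n) f i)%:E.
Proof.
move=> f0; rewrite esum_fset; last 2 first.
- exact: finite_II.
- by move=> i _; rewrite lee_fin.
by rewrite -fsbig_ord sumEFin.
Qed.

Lemma Iset_bnd g z : (forall i, (i <= k)%N -> (g i <= Mx)%N) -> Iset g z ->
  (z.1 <= k)%N /\ (z.2 <= Mx)%N.
Proof.
move=> hg [/= h1 h2]; have hz1 : (z.1 <= k)%N by rewrite -ltnS.
by split => //; exact: leq_trans (ltnW h2) (hg _ hz1).
Qed.

Lemma PL_wd (R : realType) (p : R) g : 0 <= p <= 1 -> (forall i, (i <= k)%N -> (g i <= Mx)%N) ->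
  PL p (wd @` Iset g) = ((p ^+ Mx * (1 - p) ^+ Mx) * bern_poly k g p)%:E.
Proof.
move=> hp hg; rewrite /PL esum_image; last first.
  move=> z z' /set_mem /(Iset_bnd hg) [h1 h2] /set_mem /(Iset_bnd hg) [h1' h2'].
  exact: wd_inj.
set cM := p ^+ Mx * (1 - p) ^+ Mx.
have cM0 : 0 <= cM by case/andP: hp => p0 p1; rewrite mulr_ge0 // exprn_ge0 // subr_ge0.
set q := fun i => p ^+ i * (1 - p) ^+ (k - i).
have q0 : forall i, 0 <= q i by case/andP: hp => p0 p1 i; rewrite mulr_ge0 // exprn_ge0 // subr_ge0.
transitivity (\esum_(z in Iset g) (cM * q z.1)%:E)%E.
  by apply: eq_esum => z /(Iset_bnd hg) [h1 h2]; rewrite Pw_wd.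
rewrite -(@esum_esum _ _ _ _ _ (fun i c => (cM * q i)%:E)); last first.
  by move=> i j _ _; rewrite lee_fin mulr_ge0.
transitivity (\esum_(i in `I_k.+1) ((g i)%:R * (cM * q i))%:E)%E.
  apply: eq_esum => i _.
  rewrite esum_ord; last by move=> c; rewrite mulr_ge0.
  by rewrite sumr_const card_ord mulr_natl.
rewrite esum_ord; last by move=> i; rewrite mulr_ge0 // mulr_ge0.
rewrite /bern_poly mulr_sumr; congr _%:E; apply: eq_bigr => i _.
by rewrite /q mulrCA !mulrA.
Qed.
End Construct.

Lemma backward (R : realType) (D : set R) (f : R -> R)
  (hD : forall p, D p -> 0 < p < 1) :
  (exists (k : nat) (d e : nat -> nat),
    (forall i, (i <= k)%N -> (d i <= e i)%N) /\
    (forall p, D p -> bern_poly k e p != 0 /\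
                      f p = bern_poly k d p / bern_poly k e p)) ->
  has_block_simulation D f.
Proof.
move=> [k [d [e [hde hDE]]]].
pose Mx := (\max_(i < k.+1) e i).+1.
have heM : forall i, (i <= k)%N -> (e i <= Mx)%N.
  move=> i hi; apply: leqW; rewrite -ltnS in hi.
  exact: (@leq_bigmax_cond _ xpredT (fun j : 'I_k.+1 => e j) (Ordinal hi)).
have hdM : forall i, (i <= k)%N -> (d i <= Mx)%N.
  by move=> i hi; apply: leq_trans (hde _ hi) (heM _ hi).
pose n := (k + Mx + Mx)%N.
pose A1 := wd k Mx @` Iset k d.
pose A01 := wd k Mx @` Iset k e.
pose A0 := A01 `\` A1.
have A1A01 : A1 `<=` A01.
  move=> w [z [h1 h2] <-]; exists z => //; split => //.
  by apply: leq_trans h2 _; apply: hde; rewrite -ltnS.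
have A01K : A01 `<=` SK n.
  by move=> w [z /(Iset_bnd heM) [h1 h2] <-]; rewrite /SK /= wd_size.
have A0K : A0 `<=` SK n by move=> w [/A01K].
have A1K : A1 `<=` SK n by move=> w /A1A01 /A01K.
have n0 : (0 < n)%N by rewrite /n addn_gt0 orbC.
have U : A0 `|` A1 = A01 by rewrite setDKU.
have dj : A0 `&` A1 = set0 by rewrite setIC setDIK.
exists n, A0, A1; split => //.
split; first exact: block_disj.
  exact: block_pf.
move=> p Dp; have hp := hD p Dp.
have hp' : 0 <= p <= 1 by case/andP: hp => /ltW -> /ltW ->.
have [Ene fE] := hDE p Dp.
have cM0 : p ^+ Mx * (1 - p) ^+ Mx != 0.
  by case/andP: hp => p0 p1; rewrite mulf_neq0 // expf_neq0 // ?gt_eqF // subr_gt0.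
have e1 := block_prob n0 A0K A1K hp (@subset_refl _ (A0 `|` A1)).
have e2 := block_prob n0 A0K A1K hp (@subsetUr _ A0 A1).
have P01 : PL p (A0 `|` A1) = _ := etrans (congr1 (PL p) U) (@PL_wd k Mx _ p e hp' heM).
have P1 := @PL_wd k Mx _ p d hp' hdM.
rewrite P01 /= in e1; rewrite P01 P1 /= in e2.
rewrite star_catU e1 e2 divff; last exact: mulf_neq0.
split => //.
by rewrite fE -mulf_div divff // mul1r.
Qed.

Theorem proposition2p5 (R : realType) (D : set R) (f : R -> R)
  (hD : forall p, D p -> 0 < p < 1)
  (hf : forall p, D p -> 0 < f p < 1) :
  has_block_simulation D f <->
  exists (k : nat) (d e : nat -> nat),
    (forall i, (i <= k)%N -> (d i <= e i)%N) /\
    (forall p, D p -> bern_poly k e p != 0 /\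
                      f p = bern_poly k d p / bern_poly k e p).
Proof. by split; [exact: forward | exact: backward]. Qed.
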